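(* Let $(X,d,G)$ be a $G$-system, $\{F_n\}$ a Følner sequence of $G$, and $Z$ a nonempty subset of $X$. Then: (1) if $\overline{\mathrm{mdim}}_M(G,Z,\{F_n\},d)=\infty$, then $\overline{D}_M(G,Z,\{F_n\},d)\ge1$; (2) if $\overline{\mathrm{mdim}}_M(G,Z,\{F_n\},d)<\infty$, then $0\le\overline{D}_M(G,Z,\{F_n\},d)\le1$; (3) if $0<\overline{\mathrm{mdim}}_M(G,Z,\{F_n\},d)<\infty$, then $\overline{D}_M(G,Z,\{F_n\},d)=1$.
   Context: $G$ is a countably infinite discrete amenable group; $(X,d,G)$ a compact metric space with continuous $G$-action by homeomorphisms; $\{F_n\}$ nonempty finite subsets of $G$ with $|gF_n\triangle F_n|/|F_n|\to0$ for all $g$. $d_F(x,y)=\max_{g\in F}d(gx,gy)$; $s(Z,d_F,\epsilon)$ is the maximal cardinality of a subset of $Z$ with pairwise $d_F$-distances $>\epsilon$; $h_{top}(G,Z,d,\{F_n\},\epsilon)=\limsup_n\frac1{|F_n|}\log s(Z,d_{F_n},\epsilon)$. For $s>0$, $\overline{\mathrm{mdim}}_M(G,Z,\{F_n\},s,d)=\limsup_{\epsilon\to0}h_{top}(G,Z,d,\{F_n\},\epsilon)/(\log\frac1\epsilon)^s$; $\overline{\mathrm{mdim}}_M(G,Z,\{F_n\},d)$ is the case $s=1$. The infinite upper entropy dimension is $\overline{D}_M(G,Z,\{F_n\},d)=\inf\{s>0:\overline{\mathrm{mdim}}_M(G,Z,\{F_n\},s,d)=0\}$. *)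

(* Defs.v *)
From HB Require Import structures.
From mathcomp Require Import all_boot all_order all_algebra finmap.
From mathcomp Require Import all_classical all_reals all_analysis.
Set Implicit Arguments. Unset Strict Implicit. Unset Printing Implicit Defensive.
Import Order.TTheory GRing.Theory Num.Theory.
Import numFieldNormedType.Exports.
Local Open Scope classical_set_scope.
Local Open Scope ring_scope.

Definition is_group (G : Type) (mul : G -> G -> G) (one : G) (inv : G -> G) : Prop :=
  [/\ forall a b c, mul a (mul b c) = mul (mul a b) c,
      forall a, mul one a = a /\ mul a one = a
    & forall a, mul (inv a) a = one /\ mul a (inv a) = one].

(* A continuous left action of G on X by homeomorphisms (continuity of each
   map plus the action axioms; the inverse of act g is act (inv g)). *)
Definition is_cont_action (G : Type) (X : topologicalType)
    (mul : G -> G -> G) (one : G) (act : G -> X -> X) : Prop :=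
  [/\ forall x, act one x = x,
      forall g h x, act (mul g h) x = act g (act h x)
    & forall g, continuous (act g)].

Definition ltrans (G : choiceType) (mul : G -> G -> G) (g : G) (F : {fset G}) : {fset G} :=
  [fset mul g x | x in F]%fset.
Definition fsymdiff (G : choiceType) (A B : {fset G}) : {fset G} :=
  ((A `\` B) `|` (B `\` A))%fset.

Definition folner (R : realType) (G : choiceType) (mul : G -> G -> G)
    (F : nat -> {fset G}) : Prop :=
  (forall n, F n != fset0) /\
  forall g, (fun n => (#|` fsymdiff (ltrans mul g (F n)) (F n)|%:R / #|` F n|%:R : R))
              @ \oo --> (0 : R).

Section mdim.
Context {R : realType} {G : choiceType} {X : metricType R}.
Variable act : G -> X -> X.

Definition dF (F : {fset G}) (x y : X) : R :=
  \big[Num.max/0]_(g <- F) mdist (act g x) (act g y).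

Definition separated (Z : set X) (F : {fset G}) (eps : R) (A : {fset X}) : Prop :=
  [set` A] `<=` Z /\
  forall x y, x \in A -> y \in A -> x != y -> eps < dF F x y.

(* s(Z, d_F, eps): maximal cardinality of a separated subset (as an extended
   real, a supremum; it is finite for compact X). *)
Definition sep_num (Z : set X) (F : {fset G}) (eps : R) : \bar R :=
  ereal_sup [set (#|` A|%:R)%:E | A in separated Z F eps].

Definition eln (x : \bar R) : \bar R :=
  match x with
  | r%:E => (ln r)%:E
  | +oo => +oo
  | -oo => -oo
  end%E.

Definition htop (Z : set X) (F : nat -> {fset G}) (eps : R) : \bar R :=
  limn_esup (fun n => ((#|` F n|%:R)^-1)%:E * eln (sep_num Z (F n) eps))%E.

Definition mdimM_s (Z : set X) (F : nat -> {fset G}) (s : R) : \bar R :=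
  limf_esup (fun eps : R => htop Z F eps * ((powR (ln (eps^-1)) s)^-1)%:E)%E
            (0 : R)^'+.

Definition mdimM (Z : set X) (F : nat -> {fset G}) : \bar R := mdimM_s Z F 1.

Definition DM (Z : set X) (F : nat -> {fset G}) : \bar R :=
  ereal_inf [set s%:E | s in [set s : R | 0 < s /\ mdimM_s Z F s = 0%E]].

End mdim.

(* Main.v *)
Require Import Defs.
From HB Require Import structures.
From mathcomp Require Import all_boot all_order all_algebra finmap.
From mathcomp Require Import all_classical all_reals all_analysis.
Import Order.TTheory GRing.Theory Num.Theory.
Import numFieldNormedType.Exports.
Local Open Scope classical_set_scope.
Local Open Scope ring_scope.
Local Open Scope ereal_scope.

Section H.
Context {R : realType} {G : choiceType} {X : metricType R}.
Variable act : G -> X -> X.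

Lemma limf_esup_le_near (f g : R -> \bar R) (V0 : set R) :
  (0:R)^'+ V0 -> (forall x, V0 x -> f x <= g x) ->
  limf_esup f ((0:R)^'+) <= limf_esup g ((0:R)^'+).
Proof.
move=> FV0 fg; rewrite !limf_esupE; apply: le_ereal_inf_tmp => _ [V FV <-].
apply: (le_trans (ereal_inf_lbound _)).
  by exists (V `&` V0) => //; exact: filterI.
apply: ge_ereal_sup => _ [x [Vx V0x] <-].
apply: (le_trans (fg _ V0x)); apply: ereal_sup_ubound; by exists x.
Qed.

Lemma sep_num_ge1 (Z : set X) (F : {fset G}) eps : Z !=set0 ->
  1 <= sep_num act Z F eps.
Proof.
move=> [x Zx]; apply: ereal_sup_ge; exists 1 => //.
exists [fset x]%fset; last by rewrite cardfs1.
split; first by move=> y /=; rewrite in_fset1 => /eqP ->.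
by move=> a b; rewrite !in_fset1 => /eqP -> /eqP ->; rewrite eqxx.
Qed.

Lemma htop_ge0 (Z : set X) (F : nat -> {fset G}) eps : Z !=set0 ->
  0 <= htop act Z F eps.
Proof.
move=> Z0; apply: limf_esup_ge0; first exact: filter_not_empty.
move=> n; apply: mule_ge0; first by rewrite lee_fin invr_ge0.
have := sep_num_ge1 Z (F n) eps Z0.
case: (sep_num act Z (F n) eps) => //= r; rewrite lee_fin => r1.
by rewrite lee_fin ln_ge0.
Qed.

Lemma mdim_ge0 (Z : set X) (F : nat -> {fset G}) s : Z !=set0 ->
  0 <= mdimM_s act Z F s.
Proof.
move=> Z0; apply: limf_esup_ge0; first exact: filter_not_empty.
move=> x; apply: mule_ge0; first exact: htop_ge0.
by rewrite lee_fin invr_ge0 powR_ge0.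
Qed.

Lemma mdim_anti (Z : set X) (F : nat -> {fset G}) s : Z !=set0 ->
  (s <= 1)%R -> mdimM act Z F <= mdimM_s act Z F s.
Proof.
move=> Z0 s1; apply: (@limf_esup_le_near _ _ (fun e => 0 < e < expR (-1))%R).
  near=> e; apply/andP; split; near: e; [exact: nbhs_right_gt|].
  by apply: nbhs_right_lt; exact: expR_gt0.
move=> e /andP[e0 e1]; apply: lee_wpmul2l; first exact: htop_ge0.
have L1 : (1 <= ln e^-1)%R.
  rewrite -[X in (X <= _)%R](expRK 1%R) ler_ln ?posrE ?expR_gt0 ?invr_gt0 //.
  by rewrite -[expR 1]invrK -expRN lef_pV2 ?posrE ?expR_gt0 // ltW.
have L0' := lt_le_trans ltr01 L1.
rewrite lee_fin powRr1 ?(ltW L0').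
have L0 := L0'.
rewrite lef_pV2 ?posrE ?powR_gt0 //; exact: ler1_powR.
Unshelve. all: by end_near.
Qed.

Lemma mdim_vanish (Z : set X) (F : nat -> {fset G}) s : Z !=set0 ->
  mdimM act Z F < +oo -> (1 < s)%R -> mdimM_s act Z F s = 0.
Proof.
move=> Z0 m1 s1; apply/eqP; rewrite eq_le mdim_ge0 // andbT.
apply/lee_addgt0Pr => e e0; rewrite add0e.
move: m1; rewrite /mdimM /mdimM_s limf_esupE => /ereal_inf_lt[_ [V1 FV1 <-]].
set S := ereal_sup _ => supV1.
have [M [M0 HM]] : exists M : R, (0 < M)%R /\ S <= M%:E.
  move: supV1; case: S => [r| |] // _.
    exists (Num.max 1%R r); split; first by rewrite lt_max ltr01.
    by rewrite lee_fin le_max lexx orbT.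
  by exists 1%R; split; [exact: ltr01| exact: leNye].
have s10 : (0 < s - 1)%R by rewrite subr_gt0.
pose K := Num.max 1%R (powR (M / e) (s - 1)^-1).
pose d := expR (- K).
apply: (le_trans (ereal_inf_lbound _)).
  exists (V1 `&` (fun x => 0 < x < d)%R) => //.
  apply: filterI => //.
  near=> x; apply/andP; split; near: x; [exact: nbhs_right_gt|].
  by apply: nbhs_right_lt; exact: expR_gt0.
apply: ge_ereal_sup => _ [x [V1x /andP[x0 xd]] <-].
have hx : htop act Z F x * ((powR (ln x^-1) 1)^-1)%:E <= M%:E.
  apply: le_trans HM; apply: ereal_sup_ubound; by exists x.
have LK : (K <= ln x^-1)%R.
  rewrite -[X in (X <= _)%R](expRK K) ler_ln ?posrE ?expR_gt0 ?invr_gt0 //.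
  by rewrite -[expR K]invrK -expRN lef_pV2 ?posrE ?expR_gt0 // ltW.
have L1 : (1 <= ln x^-1)%R by apply: le_trans LK; rewrite le_max lexx.
have L0 := lt_le_trans ltr01 L1.
have := htop_ge0 Z F x Z0.
move: hx; case: (htop act Z F x) => [r| |] //; last first.
  by rewrite gt0_mulye // lte_fin invr_gt0 powR_gt0.
rewrite powRr1 ?(ltW L0) // !lee_fin => hr r0.
set L := ln x^-1 in hr LK L1 L0 *.
rewrite -(mulr_powRB1 (ltW L0)) ?(lt_trans ltr01 s1) //.
rewrite invfM mulrA.
have P1 : (M / e <= L `^ (s - 1))%R.
  apply: (@le_trans _ _ (powR (powR (M / e) (s - 1)^-1) (s - 1))).
    by rewrite -powRrM mulVf ?gt_eqF // powRr1 // divr_ge0 // ltW.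
  apply: ge0_ler_powR; rewrite ?nnegrE ?powR_ge0 ?(ltW L0) ?(ltW s10) //.
  by apply: le_trans LK; rewrite le_max lexx orbT.
have Lp : (0 < L `^ (s - 1))%R by rewrite powR_gt0.
rewrite ler_pdivrMr //; apply: (le_trans hr).
by move: P1; rewrite ler_pdivrMr // mulrC.
Unshelve. all: by end_near.
Qed.
Lemma DM_ge1 (Z : set X) (F : nat -> {fset G}) : Z !=set0 ->
  0 < mdimM act Z F -> 1 <= DM act Z F.
Proof.
move=> Z0 m0; apply: le_ereal_inf_tmp => _ [t [t0 mt] <-].
rewrite lee_fin leNgt; apply/negP => t1.
have := mdim_anti Z F t Z0 (ltW t1); rewrite mt => h.
by have := lt_le_trans m0 h; rewrite ltxx.
Qed.

Lemma DM_ge0 (Z : set X) (F : nat -> {fset G}) : 0 <= DM act Z F.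
Proof.
by apply: le_ereal_inf_tmp => _ [t [t0 _] <-]; rewrite lee_fin ltW.
Qed.

Lemma DM_le1 (Z : set X) (F : nat -> {fset G}) : Z !=set0 ->
  mdimM act Z F < +oo -> DM act Z F <= 1.
Proof.
move=> Z0 m1; apply/lee_addgt0Pr => e e0; apply: ereal_inf_lbound.
exists (1 + e)%R; last by rewrite EFinD.
split; first by rewrite addr_gt0.
by apply: mdim_vanish => //; rewrite ltrDl.
Qed.
End H.

Theorem theorem3p41 (R : realType) (G : countType)
    (mul : G -> G -> G) (one : G) (inv : G -> G)
    (X : metricType R) (act : G -> X -> X) (F : nat -> {fset G}) (Z : set X) :
  is_group mul one inv ->
  infinite_set [set: G] ->
  compact [set: X] ->
  is_cont_action mul one act ->
  folner R mul F ->
  Z !=set0 ->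
  [/\ mdimM act Z F = +oo -> 1 <= DM act Z F,
      mdimM act Z F < +oo -> 0 <= DM act Z F /\ DM act Z F <= 1
    & 0 < mdimM act Z F < +oo -> DM act Z F = 1].
Proof.
move=> _ _ _ _ _ Z0; split.
- by move=> m; apply: DM_ge1 => //; rewrite m ltry.
- by move=> m; split; [exact: DM_ge0 | exact: DM_le1].
- move=> /andP[m0 m1]; apply/eqP; rewrite eq_le DM_le1 //=.
  exact: DM_ge1.
Qed.
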